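(* Let $M$ be a proper metric space and $A_0,\dots,A_n$ a coarsely transverse $n$-partition of $M$. Then there exists a coarse map $f:M\to\mathrm{C}^n$ such that $f^{-1}(A_i^{\mathrm{std}})=A_i$ for $i=0,\dots,n$.
   Context: For $Y\subseteq M$, $Y_R=\{x:d(x,Y)\le R\}$. A coarsely transverse $n$-partition is a collection of pairwise disjoint Borel sets $A_0,\dots,A_n$ with union $M$ such that $(A_0)_R\cap\dots\cap(A_n)_R$ is bounded for all $R\ge0$. $\mathrm{C}^n$ is the boundary of $\mathbb{R}^{n+1}_{\ge0}=\{x\in\mathbb{R}^{n+1}: x_a\ge0\ \forall a\}$, i.e. the set of $x\in\mathbb{R}^{n+1}_{\ge0}$ with $x_a=0$ for some $a$, with the max metric. Its standard partition is $A_i^{\mathrm{std}}=\{x\in\mathrm{C}^n: x_0,\dots,x_{i-1}>0,\ x_i=0\}$. A coarse map is a Borel map that is controlled (for each $r>0$ there is $R>0$ with $d(x,y)\le r\Rightarrow d(f(x),f(y))\le R$) and proper (preimages of bounded sets are bounded). *)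

(* Defs.v *)
From Stdlib Require Import Reals List.
Open Scope R_scope.

Definition is_metric {M : Type} (d : M -> M -> R) : Prop :=
  (forall x y, 0 <= d x y) /\
  (forall x y, d x y = 0 <-> x = y) /\
  (forall x y, d x y = d y x) /\
  (forall x y z, d x z <= d x y + d y z).

Definition open_set {M : Type} (d : M -> M -> R) (U : M -> Prop) : Prop :=
  forall x, U x -> exists e, 0 < e /\ forall y, d x y < e -> U y.

Definition closed_set {M : Type} (d : M -> M -> R) (F : M -> Prop) : Prop :=
  open_set d (fun x => ~ F x).

Definition bounded {M : Type} (d : M -> M -> R) (A : M -> Prop) : Prop :=
  exists r, forall x y, A x -> A y -> d x y <= r.

Definition compact_set {M : Type} (d : M -> M -> R) (K : M -> Prop) : Prop :=
  forall (I : Type) (U : I -> M -> Prop),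
    (forall i, open_set d (U i)) ->
    (forall x, K x -> exists i, U i x) ->
    exists l : list I, forall x, K x -> exists i, In i l /\ U i x.

Definition proper_space {M : Type} (d : M -> M -> R) : Prop :=
  forall K, closed_set d K -> bounded d K -> compact_set d K.

Definition sigma_algebra {M : Type} (S : (M -> Prop) -> Prop) : Prop :=
  S (fun _ => True) /\
  (forall A, S A -> S (fun x => ~ A x)) /\
  (forall F : nat -> M -> Prop, (forall k, S (F k)) -> S (fun x => exists k, F k x)).

Definition borel {M : Type} (d : M -> M -> R) (A : M -> Prop) : Prop :=
  forall S : (M -> Prop) -> Prop, sigma_algebra S ->
    (forall U, open_set d U -> S U) -> S A.

(** Y_R = { x : d(x,Y) <= R }, with d(x,Y) = inf_{y in Y} d(x,y) (= +oo if Y empty). *)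
Definition thick {M : Type} (d : M -> M -> R) (Y : M -> Prop) (r : R) : M -> Prop :=
  fun x => forall e, 0 < e -> exists y, Y y /\ d x y < r + e.

Definition coarsely_transverse_partition {M : Type} (d : M -> M -> R)
  (n : nat) (A : nat -> M -> Prop) : Prop :=
  (forall i, (i <= n)%nat -> borel d (A i)) /\
  (forall i j x, (i <= n)%nat -> (j <= n)%nat -> i <> j -> A i x -> A j x -> False) /\
  (forall x, exists i, (i <= n)%nat /\ A i x) /\
  (forall r, 0 <= r ->
     bounded d (fun x => forall i, (i <= n)%nat -> thick d (A i) r x)).

(** The space C^n: points of R^{n+1} (coordinates 0..n; coordinates > n are 0)
    with all coordinates >= 0 and at least one coordinate 0. *)
Definition in_Cn (n : nat) (p : nat -> R) : Prop :=
  (forall i, (n < i)%nat -> p i = 0) /\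
  (forall i, (i <= n)%nat -> 0 <= p i) /\
  (exists i, (i <= n)%nat /\ p i = 0).

Definition Cn (n : nat) : Type := { p : nat -> R | in_Cn n p }.

Fixpoint maxdist (n : nat) (p q : nat -> R) : R :=
  match n with
  | O => Rabs (p O - q O)
  | S k => Rmax (maxdist k p q) (Rabs (p (S k) - q (S k)))
  end.

Definition dCn (n : nat) (p q : Cn n) : R := maxdist n (proj1_sig p) (proj1_sig q).

Definition Astd (n i : nat) (p : Cn n) : Prop :=
  (forall j, (j < i)%nat -> 0 < proj1_sig p j) /\ proj1_sig p i = 0.

Definition borel_map {M N : Type} (dM : M -> M -> R) (dN : N -> N -> R) (f : M -> N) : Prop :=
  forall B, borel dN B -> borel dM (fun x => B (f x)).

Definition controlled {M N : Type} (dM : M -> M -> R) (dN : N -> N -> R) (f : M -> N) : Prop :=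
  forall r, 0 < r -> exists R', 0 < R' /\
    forall x y, dM x y <= r -> dN (f x) (f y) <= R'.

Definition metric_proper_map {M N : Type} (dM : M -> M -> R) (dN : N -> N -> R) (f : M -> N) : Prop :=
  forall B, bounded dN B -> bounded dM (fun x => B (f x)).

Definition coarse_map {M N : Type} (dM : M -> M -> R) (dN : N -> N -> R) (f : M -> N) : Prop :=
  borel_map dM dN f /\ controlled dM dN f /\ metric_proper_map dM dN f.

(* Main.v *)
Require Import Defs.
From Stdlib Require Import Reals.
From Stdlib Require Import Lra Lia Arith Classical ClassicalEpsilon FunctionalExtensionality PropExtensionality ProofIrrelevance.
Import Defs.
Open Scope R_scope.

Lemma le_eps (a b : R) : (forall e, 0 < e -> a < b + e) -> a <= b.
Proof.
  intros H. destruct (Rle_dec a b) as [h|h]; auto.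
  apply Rnot_le_lt in h. specialize (H ((a - b)/2)). lra.
Qed.

Definition glb_prop {M : Type} (d : M -> M -> R) (Y : M -> Prop) (x : M) (m : R) : Prop :=
  (forall y, Y y -> m <= d x y) /\ (forall e, 0 < e -> exists y, Y y /\ d x y < m + e).

Lemma glb_exists {M : Type} (d : M -> M -> R) (Y : M -> Prop) (x : M) :
  is_metric d -> (exists y, Y y) -> exists m, glb_prop d Y x m.
Proof.
  intros [Hd0 _] [y0 Hy0].
  set (E := fun r => exists y, Y y /\ r = - d x y).
  assert (Hb : bound E).
  { exists 0. intros r [y [_ ->]]. specialize (Hd0 x y). lra. }
  assert (Hne : exists r, E r) by (exists (- d x y0); exists y0; auto).
  destruct (completeness E Hb Hne) as [m [Hub Hlub]].
  exists (- m). split.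
  - intros y Hy. assert (E (- d x y)) by (exists y; auto). specialize (Hub _ H). lra.
  - intros e He. apply NNPP. intro Hno.
    assert (is_upper_bound E (m - e)).
    { intros r [y [Hy ->]]. destruct (Rle_dec (- d x y) (m - e)); auto.
      exfalso. apply Hno. exists y. split; auto. lra. }
    specialize (Hlub _ H). lra.
Qed.

Definition dist_set {M : Type} (d : M -> M -> R) (Y : M -> Prop) (x : M) : R :=
  match excluded_middle_informative (exists m, glb_prop d Y x m) with
  | left H => proj1_sig (constructive_indefinite_description _ H)
  | right _ => 0
  end.

Lemma dist_set_spec {M : Type} (d : M -> M -> R) (Y : M -> Prop) (x : M) :
  is_metric d -> (exists y, Y y) -> glb_prop d Y x (dist_set d Y x).
Proof.
  intros Hm Hne. unfold dist_set.
  destruct (excluded_middle_informative _) as [H|H].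
  - exact (proj2_sig (constructive_indefinite_description _ H)).
  - exfalso. apply H. apply glb_exists; auto.
Qed.

Lemma dist_set_le {M : Type} (d : M -> M -> R) (Y : M -> Prop) (x y : M) :
  is_metric d -> (exists y, Y y) -> Y y -> dist_set d Y x <= d x y.
Proof. intros Hm Hne Hy. apply (proj1 (dist_set_spec d Y x Hm Hne)); auto. Qed.

Lemma dist_set_nonneg {M : Type} (d : M -> M -> R) (Y : M -> Prop) (x : M) :
  is_metric d -> (exists y, Y y) -> 0 <= dist_set d Y x.
Proof.
  intros Hm Hne. apply le_eps. intros e He.
  destruct (proj2 (dist_set_spec d Y x Hm Hne) e He) as [y [_ Hy]].
  destruct Hm as [Hd0 _]. specialize (Hd0 x y). lra.
Qed.

Lemma dist_set_lip {M : Type} (d : M -> M -> R) (Y : M -> Prop) (x x' : M) :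
  is_metric d -> (exists y, Y y) -> dist_set d Y x <= dist_set d Y x' + d x x'.
Proof.
  intros Hm Hne. apply le_eps. intros e He.
  destruct (proj2 (dist_set_spec d Y x' Hm Hne) e He) as [y [Hy Hxy]].
  pose proof (dist_set_le d Y x y Hm Hne Hy).
  destruct Hm as [_ [_ [_ Ht]]]. specialize (Ht x x' y). lra.
Qed.

Lemma maxdist_le (n : nat) (p q : nat -> R) (r : R) :
  (forall j, (j <= n)%nat -> Rabs (p j - q j) <= r) -> maxdist n p q <= r.
Proof.
  induction n; intros H; simpl.
  - apply H; auto.
  - apply Rmax_lub.
    + apply IHn. intros j Hj. apply H. lia.
    + apply H. lia.
Qed.

Lemma maxdist_ge (n : nat) (p q : nat -> R) (j : nat) :
  (j <= n)%nat -> Rabs (p j - q j) <= maxdist n p q.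
Proof.
  induction n; intros H; simpl.
  - assert (j = 0%nat) by lia. subst. lra.
  - destruct (Nat.eq_dec j (S n)) as [->|Hne].
    + apply Rmax_r.
    + eapply Rle_trans; [apply IHn; lia| apply Rmax_l].
Qed.

Lemma Cn_eq (n : nat) (p q : Cn n) :
  (forall j, proj1_sig p j = proj1_sig q j) -> p = q.
Proof.
  destruct p as [p Hp], q as [q Hq]; simpl. intros H.
  assert (p = q) by (extensionality j; auto). subst.
  f_equal. apply proof_irrelevance.
Qed.

Lemma borel_ext {M : Type} (d : M -> M -> R) (P Q : M -> Prop) :
  (forall x, P x <-> Q x) -> borel d P -> borel d Q.
Proof.
  intros H HP. replace Q with P; auto.
  extensionality x. apply propositional_extensionality. auto.
Qed.

Lemma borel_open {M : Type} (d : M -> M -> R) (U : M -> Prop) :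
  open_set d U -> borel d U.
Proof. intros HU S HS HO. auto. Qed.

Lemma borel_true {M : Type} (d : M -> M -> R) : borel d (fun _ => True).
Proof. intros S HS HO. apply HS. Qed.

Lemma borel_compl {M : Type} (d : M -> M -> R) (P : M -> Prop) :
  borel d P -> borel d (fun x => ~ P x).
Proof. intros HP S HS HO. apply (proj1 (proj2 HS)). apply HP; auto. Qed.

Lemma borel_cunion {M : Type} (d : M -> M -> R) (F : nat -> M -> Prop) :
  (forall k, borel d (F k)) -> borel d (fun x => exists k, F k x).
Proof. intros HF S HS HO. apply (proj2 (proj2 HS)). intros k. apply (HF k); auto. Qed.

Lemma borel_union2 {M : Type} (d : M -> M -> R) (P Q : M -> Prop) :
  borel d P -> borel d Q -> borel d (fun x => P x \/ Q x).
Proof.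
  intros HP HQ.
  apply borel_ext with (P := fun x => exists k, (match k with O => P | _ => Q end) x).
  - intros x; split.
    + intros [[|k] H]; auto.
    + intros [H|H]; [exists O | exists 1%nat]; auto.
  - apply borel_cunion. intros [|k]; auto.
Qed.

Lemma borel_inter {M : Type} (d : M -> M -> R) (P Q : M -> Prop) :
  borel d P -> borel d Q -> borel d (fun x => P x /\ Q x).
Proof.
  intros HP HQ.
  apply borel_ext with (P := fun x => ~ (~ P x \/ ~ Q x)).
  - intros x; split.
    + intros H. split; apply NNPP; tauto.
    + tauto.
  - apply borel_compl. apply borel_union2; apply borel_compl; auto.
Qed.

Lemma borel_empty {M : Type} (d : M -> M -> R) : borel d (fun _ => False).
Proof.
  apply borel_ext with (P := fun _ => ~ True). { tauto. }
  apply borel_compl, borel_true.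
Qed.

Theorem lemma5p10 (M : Type) (d : M -> M -> R) (n : nat) (A : nat -> M -> Prop) :
  is_metric d -> proper_space d ->
  coarsely_transverse_partition d n A ->
  exists f : M -> Cn n,
    coarse_map d (dCn n) f /\
    (forall i, (i <= n)%nat -> forall x, Astd n i (f x) <-> A i x).
Proof.
  intros Hm Hp [Hbor [Hdisj [Hcov Hbd]]].
  destruct (classic (exists x0 : M, True)) as [[x0 _]|Hemp].
  2: {
    exists (fun x => False_rect _ (Hemp (ex_intro _ x I))).
    split; [split; [|split]|].
    - intros B _. apply borel_open. intros x. exfalso. apply Hemp. exists x; auto.
    - intros r _. exists 1. split; [lra|]. intros x. exfalso. apply Hemp. exists x; auto.
    - intros B _. exists 0. intros x. exfalso. apply Hemp. exists x; auto.
    - intros i _ x. exfalso. apply Hemp. exists x; auto. }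
  pose proof Hm as [Hd0 [Hdeq [Hdsym Hdtri]]].
  assert (Hdxx : forall x, d x x = 0) by (intros; apply Hdeq; auto).
  pose (B := fun j y => A j y \/ y = x0).
  assert (HBne : forall j, exists y, B j y) by (intro j; exists x0; right; reflexivity).
  pose (D := fun j x => dist_set d (B j) x).
  assert (HD0 : forall j x, 0 <= D j x) by (intros; apply dist_set_nonneg; auto).
  assert (HDle : forall j x y, B j y -> D j x <= d x y) by (intros; apply dist_set_le; auto).
  assert (HDlip : forall j x y, D j x <= D j y + d x y) by (intros; apply dist_set_lip; auto).
  assert (HDeps : forall j x e, 0 < e -> exists y, B j y /\ d x y < D j x + e)
    by (intros; apply (proj2 (dist_set_spec d (B j) x Hm (HBne j))); auto).
  pose (pt := fun (S : nat -> Prop) x j =>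
     if le_dec j n then (if excluded_middle_informative (S j) then 0 else 1 + D j x) else 0).
  assert (Hpin : forall S x j, (j <= n)%nat -> S j -> pt S x j = 0).
  { intros S x j Hj HS. unfold pt. destruct (le_dec j n); [|lia].
    destruct (excluded_middle_informative (S j)); tauto. }
  assert (Hpout : forall S x j, (j <= n)%nat -> ~ S j -> pt S x j = 1 + D j x).
  { intros S x j Hj HS. unfold pt. destruct (le_dec j n); [|lia].
    destruct (excluded_middle_informative (S j)); tauto. }
  assert (Hpbig : forall S x j, ~ (j <= n)%nat -> pt S x j = 0).
  { intros S x j Hj. unfold pt. destruct (le_dec j n); tauto. }
  assert (Hpcase : forall S x j, (j <= n)%nat -> (S j /\ pt S x j = 0) \/ (~ S j /\ pt S x j = 1 + D j x)).
  { intros S x j Hj. destruct (classic (S j)); [left|right]; split; auto. }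
  assert (Hin : forall S x, (exists i, (i <= n)%nat /\ S i) -> in_Cn n (pt S x)).
  { intros S x [i [Hi HSi]]. split; [|split].
    - intros j Hj. apply Hpbig. lia.
    - intros j Hj. destruct (Hpcase S x j Hj) as [[_ ->]|[_ ->]]; [lra|]. specialize (HD0 j x). lra.
    - exists i. split; auto. }
  pose (f := fun x => exist (in_Cn n) (pt (fun j => A j x) x) (Hin _ x (Hcov x))).
  assert (Hf : forall x j, proj1_sig (f x) j = pt (fun j => A j x) x j) by reflexivity.
  exists f. split; [split; [|split]|].
  -
    intros Bs HB.
    apply (HB (fun C => borel d (fun x => C (f x)))).
    { split; [|split].
      - exact (borel_true d).
      - intros C HC. exact (borel_compl d _ HC).
      - intros F HF. exact (borel_cunion d (fun k x => F k (f x)) HF). }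
    intros U HU.
    assert (Hg : forall i, (i <= n)%nat -> exists V, borel d V /\ forall x, A i x -> (U (f x) <-> V x)).
    { intros i Hi.
      pose (g := fun x => exist (in_Cn n) (pt (fun j => j = i) x) (Hin _ x (ex_intro _ i (conj Hi eq_refl)))).
      exists (fun x => U (g x)). split.
      - apply borel_open. intros x Hx. destruct (HU _ Hx) as [e [He HUe]].
        exists e. split; auto. intros y Hy. apply HUe. unfold dCn. simpl.
        eapply Rle_lt_trans; [|exact Hy]. apply maxdist_le. intros j Hj.
        destruct (Hpcase (fun j => j = i) x j Hj) as [[H1 ->]|[H1 ->]];
        destruct (Hpcase (fun j => j = i) y j Hj) as [[H2 ->]|[H2 ->]]; try tauto.
        + rewrite Rminus_0_r, Rabs_R0. auto.
        + apply Rabs_le. pose proof (HDlip j x y). pose proof (HDlip j y x).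
          rewrite (Hdsym y x) in *. lra.
      - intros x Hx. replace (g x) with (f x); [tauto|].
        apply Cn_eq. intros j. simpl. destruct (le_dec j n) as [Hj|Hj].
        + destruct (Nat.eq_dec j i) as [->|Hji].
          * rewrite !Hpin; auto.
          * rewrite !Hpout; auto. intros Hjx. apply (Hdisj j i x); auto.
        + rewrite !Hpbig; auto. }
    apply borel_ext with (P := fun x => exists k, (k <= n)%nat /\ A k x /\ U (f x)).
    { intros x. split.
      - intros [k [_ [_ H]]]. auto.
      - intros H. destruct (Hcov x) as [k [Hk Hkx]]. exists k. auto. }
    apply borel_cunion. intros k.
    destruct (le_dec k n) as [Hk|Hk].
    + destruct (Hg k Hk) as [V [HV HUV]].
      apply borel_ext with (P := fun x => A k x /\ V x).
      { intros x. split.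
        - intros [H1 H2]. split; auto. split; auto. apply HUV; auto.
        - intros [_ [H1 H2]]. split; auto. apply HUV; auto. }
      apply borel_inter; auto.
    + apply borel_ext with (P := fun _ => False). { intros x; tauto. }
      apply borel_empty.
  -
    intros r Hr. exists (r + 1). split; [lra|]. intros x y Hxy.
    unfold dCn. apply maxdist_le. intros j Hj. rewrite !Hf.
    destruct (Hpcase (fun j => A j x) x j Hj) as [[H1 ->]|[H1 ->]];
    destruct (Hpcase (fun j => A j y) y j Hj) as [[H2 ->]|[H2 ->]].
    + rewrite Rminus_0_r, Rabs_R0. lra.
    + assert (B j x) by (left; auto). pose proof (HDle j y x H) as Hq. pose proof (HD0 j y).
      rewrite (Hdsym y x) in Hq. apply Rabs_le. lra.
    + assert (B j y) by (left; auto). pose proof (HDle j x y H). pose proof (HD0 j x).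
      apply Rabs_le. lra.
    + apply Rabs_le. pose proof (HDlip j x y). pose proof (HDlip j y x).
      rewrite (Hdsym y x) in *. lra.
  -
    intros Bs [r Hr].
    assert (HR0 : exists R0, forall x, Bs (f x) -> d x0 x <= R0).
    { destruct (classic (exists x1, Bs (f x1))) as [[x1 Hx1]|Hno].
      2: { exists 0. intros x Hx. exfalso. apply Hno. eauto. }
      set (K := r + 1 + d x1 x0).
      assert (Hr0 : 0 <= r).
      { specialize (Hr _ _ Hx1 Hx1). unfold dCn in Hr.
        pose proof (maxdist_ge n (proj1_sig (f x1)) (proj1_sig (f x1)) 0 ltac:(lia)).
        eapply Rle_trans; [|exact Hr]. eapply Rle_trans; [|exact H]. apply Rabs_pos. }
      assert (HK0 : 0 <= K) by (unfold K; specialize (Hd0 x1 x0); lra).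
      assert (HDK : forall x, Bs (f x) -> forall j, (j <= n)%nat -> D j x <= K).
      { intros x Hx j Hj. specialize (Hr _ _ Hx Hx1). unfold dCn in Hr.
        pose proof (maxdist_ge n (proj1_sig (f x)) (proj1_sig (f x1)) j Hj) as Hmj.
        rewrite !Hf in Hmj.
        pose proof (Rle_abs (pt (fun j => A j x) x j - pt (fun j => A j x1) x1 j)) as Habs.
        assert (Hq1 : D j x <= pt (fun j => A j x) x j).
        { destruct (Hpcase (fun j => A j x) x j Hj) as [[Hc1 ->]|[Hc1 ->]]; [|lra].
          assert (Hbx : B j x) by (left; auto). specialize (HDle j x x Hbx). rewrite Hdxx in HDle. lra. }
        assert (Hq2 : pt (fun j => A j x1) x1 j <= 1 + d x1 x0).
        { assert (Hb0 : B j x0) by (right; auto). specialize (HDle j x1 x0 Hb0). specialize (HD0 j x1).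
          destruct (Hpcase (fun j => A j x1) x1 j Hj) as [[Hc1 ->]|[Hc1 ->]]; lra. }
        unfold K. pose proof (Rle_trans _ _ _ Habs (Rle_trans _ _ _ Hmj Hr)) as Hs. clear Habs Hmj. revert Hq1 Hq2 Hs. generalize (pt (fun j => A j x) x j) (pt (fun j => A j x1) x1 j). intros. lra. }
      assert (Hsplit : forall x, Bs (f x) -> d x0 x <= K \/ (forall j, (j <= n)%nat -> thick d (A j) K x)).
      { intros x Hx. destruct (Rle_dec (d x0 x) K) as [h|h]; [left; auto|right].
        intros j Hj e He.
        destruct (HDeps j x (Rmin e (d x0 x - K))) as [y [Hy Hxy]].
        { apply Rmin_pos; lra. }
        pose proof (HDK x Hx j Hj). pose proof (Rmin_l e (d x0 x - K)). pose proof (Rmin_r e (d x0 x - K)).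
        destruct Hy as [Hy | ->].
        - exists y. split; auto. lra.
        - rewrite Hdsym in Hxy. lra. }
      destruct (Hbd K HK0) as [rT HT].
      destruct (classic (exists t0, forall j, (j <= n)%nat -> thick d (A j) K t0)) as [[t0 Ht0]|Hno].
      - exists (K + d x0 t0 + rT). intros x Hx.
        pose proof (HT t0 t0 Ht0 Ht0) as HrT. rewrite Hdxx in HrT. specialize (Hd0 x0 t0).
        destruct (Hsplit x Hx) as [h|h].
        + lra.
        + specialize (HT t0 x Ht0 h). specialize (Hdtri x0 t0 x). lra.
      - exists K. intros x Hx. destruct (Hsplit x Hx) as [h|h]; auto.
        exfalso. apply Hno. eauto. }
    destruct HR0 as [R0 HR0]. exists (2 * R0). intros x y Hx Hy.
    pose proof (HR0 x Hx). pose proof (HR0 y Hy). specialize (Hdtri x x0 y).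
    rewrite (Hdsym x x0) in Hdtri. lra.
  -
    intros i Hi x. unfold Astd. rewrite Hf. split.
    + intros [_ H0]. destruct (Hpcase (fun j => A j x) x i Hi) as [[H1 _]|[_ H1]]; auto.
      specialize (HD0 i x). lra.
    + intros Hx. split.
      * intros j Hj. rewrite Hf. rewrite Hpout; [| lia |].
        -- specialize (HD0 j x). lra.
        -- intros Hjx. apply (Hdisj j i x); auto; lia.
      * apply Hpin; auto.
Qed.
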